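(* $\mathrm{CLC}_0$ has the unique normal form property: if $t_1$ and $t_2$ are in $\mathrm{CLC}_0$-normal form and $t_1=_{\mathrm{CLC}_0}t_2$, then $t_1\equiv t_2$.
   Context: Terms are built from variables and the constants $C,T,F,K,S$ by binary application (left-associative); $\equiv$ is syntactic identity. $\mathrm{CLC}_0$ is the term rewriting system with rules $C\,T\,x\,y\to x$; $C\,F\,x\,y\to y$; $C\,z\,x\,x\to x$; $K\,x\,y\to x$; $S\,x\,y\,z\to x\,z\,(y\,z)$, rewriting closed under contexts; $=_{\mathrm{CLC}_0}$ is its conversion relation and a normal form is a term containing no redex. *)

(* Defs.v *)
From Stdlib Require Import Relations.

Inductive term : Type :=
| Var : nat -> term
| Cc : term
| Ct : term
| Cf : term
| Ck : term
| Cs : term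
| App : term -> term -> term.

Inductive rule : term -> term -> Prop :=
| r_CT : forall x y, rule (App (App (App Cc Ct) x) y) x
| r_CF : forall x y, rule (App (App (App Cc Cf) x) y) y
| r_Cxx : forall z x, rule (App (App (App Cc z) x) x) x
| r_K : forall x y, rule (App (App Ck x) y) x
| r_S : forall x y z, rule (App (App (App Cs x) y) z) (App (App x z) (App y z)).

Inductive step : term -> term -> Prop :=
| st_root : forall s t, rule s t -> step s t
| st_appl : forall s s' t, step s s' -> step (App s t) (App s' t)
| st_appr : forall s t t', step t t' -> step (App s t) (App s t').

Definition conv : term -> term -> Prop := clos_refl_sym_trans term step.

Definition normal_form (t : term) : Prop := forall t', ~ step t t'.

(* Main.v *)
Require Import Defs.
From Stdlib Require Import Relations List ClassicalEpsilon.
Import ListNotations.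

Inductive tok : Type := atom (n : nat) | arr (l : list tok) (m : tok).
Definition D := tok -> Prop.
Definition sub (l : list tok) (X : D) := forall a, In a l -> X a.
Definition ap (X Y : D) : D := fun m => exists l, sub l Y /\ X (arr l m).
Definition L (l : list tok) : D := fun a => In a l.
Definition eqD (X Y : D) := forall m, X m <-> Y m.
Definition incl (X Y : D) := forall m, X m -> Y m.

Definition Kd : D := fun t => exists l1 l2 m, t = arr l1 (arr l2 m) /\ In m l1.
Definition Sd : D := fun t => exists l1 l2 l3 m, t = arr l1 (arr l2 (arr l3 m)) /\
   ap (ap (L l1) (L l3)) (ap (L l2) (L l3)) m.
Definition Cd : D := fun t => exists l1 l2 l3 m, t = arr l1 (arr l2 (arr l3 m)) /\
   ((In m l2 /\ In m l3) \/ (In m l2 /\ In (atom 0) l1) \/ (In m l3 /\ In (atom 1) l1)).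
Definition Td : D := fun t => t = atom 0.
Definition Fd : D := fun t => t = atom 1.

Lemma ap_mono X X' Y Y' : incl X X' -> incl Y Y' -> incl (ap X Y) (ap X' Y').
Proof. intros H1 H2 m [l [Hl Hx]]. exists l. split; auto. intros a Ha; auto. Qed.

Lemma ap_eq X X' Y Y' : eqD X X' -> eqD Y Y' -> eqD (ap X Y) (ap X' Y').
Proof. intros H1 H2 m; split; apply ap_mono; intros a; firstorder. Qed.

Lemma ap3 G X Y Z m : ap (ap (ap G X) Y) Z m <->
  exists l3 l2 l1, sub l3 Z /\ sub l2 Y /\ sub l1 X /\ G (arr l1 (arr l2 (arr l3 m))).
Proof. unfold ap; split.
  - intros [l3 [H3 [l2 [H2 [l1 [H1 HG]]]]]]. eauto 10.
  - intros [l3 [l2 [l1 [H3 [H2 [H1 HG]]]]]]. eauto 10.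
Qed.

Lemma K_ok X Y : eqD (ap (ap Kd X) Y) X.
Proof. intro m; unfold ap; split.
  - intros [l2 [H2 [l1 [H1 [l1' [l2' [m' [E Hi]]]]]]]]. injection E; intros; subst. auto.
  - intros Hx. exists []. split. intros a []. exists [m]. split.
    intros a [<-|[]]; auto. exists [m], [], m. simpl; auto.
Qed.

Lemma C_char Z X Y m : ap (ap (ap Cd Z) X) Y m <->
  exists l3 l2 l1, sub l3 Y /\ sub l2 X /\ sub l1 Z /\
   ((In m l2 /\ In m l3) \/ (In m l2 /\ In (atom 0) l1) \/ (In m l3 /\ In (atom 1) l1)).
Proof. rewrite ap3. split.
  - intros [l3 [l2 [l1 [H3 [H2 [H1 [a [b [c [d [E H]]]]]]]]]]]. injection E; intros; subst. eauto 10.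
  - intros [l3 [l2 [l1 [H3 [H2 [H1 H]]]]]]. exists l3, l2, l1. repeat split; auto.
    exists l1, l2, l3, m; auto.
Qed.

Lemma CT_ok X Y : eqD (ap (ap (ap Cd Td) X) Y) X.
Proof. intro m; rewrite C_char; split.
  - intros [l3 [l2 [l1 [H3 [H2 [H1 [[A B]|[[A B]|[A B]]]]]]]]]; auto.
    apply H1 in B. discriminate B.
  - intros Hx. exists [], [m], [atom 0]. repeat split.
    intros a []. intros a [<-|[]]; auto. intros a [<-|[]]; reflexivity.
    right; left; simpl; auto.
Qed.

Lemma CF_ok X Y : eqD (ap (ap (ap Cd Fd) X) Y) Y.
Proof. intro m; rewrite C_char; split.
  - intros [l3 [l2 [l1 [H3 [H2 [H1 [[A B]|[[A B]|[A B]]]]]]]]]; auto.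
    apply H1 in B. discriminate B.
  - intros Hx. exists [m], [], [atom 1]. repeat split.
    intros a [<-|[]]; auto. intros a []. intros a [<-|[]]; reflexivity.
    right; right; simpl; auto.
Qed.

Lemma Cxx_ok Z X : eqD (ap (ap (ap Cd Z) X) X) X.
Proof. intro m; rewrite C_char; split.
  - intros [l3 [l2 [l1 [H3 [H2 [H1 [[A B]|[[A B]|[A B]]]]]]]]]; auto.
  - intros Hx. exists [m], [m], []. repeat split.
    1,2: intros a [<-|[]]; auto. intros a []. left; simpl; auto.
Qed.

Lemma collect Y Z e : sub e (ap Y Z) -> exists l2 l3, sub l2 Y /\ sub l3 Z /\ sub e (ap (L l2) (L l3)).
Proof. induction e as [|a e IH]; intros H.
  - exists [], []. repeat split; intros x [].
  - destruct IH as [l2 [l3 [H2 [H3 H4]]]]. intros x Hx; apply H; simpl; auto.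
    destruct (H a (or_introl eq_refl)) as [la [Hla Hy]].
    exists (arr la a :: l2), (la ++ l3). repeat split.
    + intros x [<-|Hx]; auto.
    + intros x Hx. apply in_app_or in Hx as [Hx|Hx]; auto.
    + intros x [<-|Hx].
      * exists la. split. intros b Hb. unfold L. apply in_or_app; auto. left; auto.
      * eapply ap_mono; [| |apply H4; exact Hx]; intros b Hb; unfold L in *; simpl; auto.
        apply in_or_app; auto.
Qed.

Lemma S_ok X Y Z : eqD (ap (ap (ap Sd X) Y) Z) (ap (ap X Z) (ap Y Z)).
Proof. intro m; rewrite ap3; split.
  - intros [l3 [l2 [l1 [H3 [H2 [H1 [a [b [c [d [E H]]]]]]]]]]]. injection E; intros; subst.
    eapply ap_mono; [| |exact H]; apply ap_mono; intros u Hu; auto.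
  - intros [e [He [l [Hl Hx]]]].
    destruct (collect _ _ _ He) as [l2 [l3 [H2 [H3 H4]]]].
    exists (l ++ l3), l2, [arr l (arr e m)]. repeat split; auto.
    + intros u Hu. apply in_app_or in Hu as [Hu|Hu]; auto.
    + intros u [<-|[]]; auto.
    + exists [arr l (arr e m)], l2, (l ++ l3), m. split; auto.
      exists e. split.
      * intros u Hu. eapply ap_mono; [| |apply H4; exact Hu]; intros b Hb; unfold L in *; auto.
        apply in_or_app; auto.
      * exists l. split. intros u Hu. unfold L. apply in_or_app; auto. left; auto.
Qed.

Fixpoint sem (rho : nat -> D) (t : term) : D :=
  match t with
  | Var n => rho n | Cc => Cd | Ct => Td | Cf => Fd | Ck => Kd | Cs => Sd
  | App a b => ap (sem rho a) (sem rho b)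
  end.

Lemma step_sem rho s t : step s t -> eqD (sem rho s) (sem rho t).
Proof. induction 1.
  - destruct H; simpl. apply CT_ok. apply CF_ok. apply Cxx_ok. apply K_ok. apply S_ok.
  - simpl. apply ap_eq; auto. intro; tauto.
  - simpl. apply ap_eq; auto. intro; tauto.
Qed.

Lemma conv_sem rho s t : conv s t -> eqD (sem rho s) (sem rho t).
Proof. induction 1.
  - apply step_sem; auto.
  - intro; tauto.
  - intro m; specialize (IHclos_refl_sym_trans m); tauto.
  - intro m; specialize (IHclos_refl_sym_trans1 m); specialize (IHclos_refl_sym_trans2 m); tauto.
Qed.

Lemma consistent : ~ conv Ct Cf.
Proof. intro H. apply (conv_sem (fun _ _ => False)) in H.
  specialize (H (atom 0)). simpl in H. unfold Td, Fd in H.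
  assert (atom 0 = atom 1) by (apply H; reflexivity). discriminate.
Qed.

Definition atomic (t : term) : Prop := match t with App _ _ => False | _ => True end.

Inductive par : term -> term -> Prop :=
| p_atom : forall t, atomic t -> par t t
| p_app : forall a a' b b', par a a' -> par b b' -> par (App a b) (App a' b')
| p_K : forall x x' y, par x x' -> par (App (App Ck x) y) x'
| p_S : forall x x' y y' z z', par x x' -> par y y' -> par z z' ->
    par (App (App (App Cs x) y) z) (App (App x' z') (App y' z'))
| p_C1 : forall z x x' y, conv z Ct -> par x x' -> par (App (App (App Cc z) x) y) x'
| p_C2 : forall z x y y', conv z Cf -> par y y' -> par (App (App (App Cc z) x) y) y'
| p_C3 : forall z x x' y, conv x y -> ~ conv z Ct -> ~ conv z Cf -> par x x' ->
    par (App (App (App Cc z) x) y) x'.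

Lemma conv_appl a a' b : conv a a' -> conv (App a b) (App a' b).
Proof. induction 1. apply rst_step. apply st_appl; auto. apply rst_refl.
  apply rst_sym; auto. eapply rst_trans; eauto. Qed.
Lemma conv_appr a b b' : conv b b' -> conv (App a b) (App a b').
Proof. induction 1. apply rst_step. apply st_appr; auto. apply rst_refl.
  apply rst_sym; auto. eapply rst_trans; eauto. Qed.
Lemma conv_app a a' b b' : conv a a' -> conv b b' -> conv (App a b) (App a' b').
Proof. intros. eapply rst_trans. apply conv_appl; eauto. apply conv_appr; auto. Qed.
Lemma conv_rule s t : rule s t -> conv s t.
Proof. intros; apply rst_step, st_root; auto. Qed.
Lemma conv_tr a b c : conv a b -> conv b c -> conv a c.
Proof. apply rst_trans. Qed.
Lemma conv_sy a b : conv a b -> conv b a.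
Proof. apply rst_sym. Qed.

Lemma par_conv s t : par s t -> conv s t.
Proof. induction 1.
  - apply rst_refl.
  - apply conv_app; auto.
  - eapply conv_tr. apply conv_rule, r_K. auto.
  - eapply conv_tr. apply conv_rule, r_S. apply conv_app; apply conv_app; auto.
  - eapply conv_tr. apply conv_appl, conv_appl, conv_appr; eauto.
    eapply conv_tr. apply conv_rule, r_CT. auto.
  - eapply conv_tr. apply conv_appl, conv_appl, conv_appr; eauto.
    eapply conv_tr. apply conv_rule, r_CF. auto.
  - eapply conv_tr. apply conv_appr. apply conv_sy; eauto.
    eapply conv_tr. apply conv_rule, r_Cxx. auto.
Qed.

Definition dec (P : Prop) : {P} + {~P} := excluded_middle_informative P.

Fixpoint cd (t : term) : term :=
  match t with
  | App (App Ck x) y => cd x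
  | App (App (App Cs x) y) z => App (App (cd x) (cd z)) (App (cd y) (cd z))
  | App (App (App Cc z) x) y =>
      if dec (conv z Ct) then cd x else if dec (conv z Cf) then cd y
      else if dec (conv x y) then cd x else App (App (App Cc (cd z)) (cd x)) (cd y)
  | App a b => App (cd a) (cd b)
  | t => t
  end.

Lemma par_refl t : par t t.
Proof. induction t; try (apply p_atom; exact I). apply p_app; auto. Qed.

Ltac inv H := inversion H; subst; try (match goal with h: atomic (App _ _) |- _ => destruct h end).

Lemma par_atomic c t : par c t -> atomic c -> t = c.
Proof. intros H; inversion H; subst; simpl; tauto. Qed.

Ltac pat := repeat match goal with h : par ?c ?t |- _ =>
   let e := fresh in assert (e : atomic c) by exact I; apply par_atomic in h; [|exact e]; subst; clear e end.

Lemma par_inv1 c a t : atomic c -> par (App c a) t -> exists a', t = App c a' /\ par a a'.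
Proof. intros Hc H; inversion H; subst; try contradiction. apply par_atomic in H2; auto. subst; eauto. Qed.

Lemma par_inv2 c a b t : atomic c -> par (App (App c a) b) t -> c <> Ck ->
  exists a' b', t = App (App c a') b' /\ par a a' /\ par b b'.
Proof. intros Hc H Hk; inversion H; subst; try contradiction; try congruence.
  apply par_inv1 in H2 as [x [E Hx]]; auto. subst. eauto. Qed.

Lemma par_cd s t : par s t -> par t (cd s).
Proof. induction 1.
  - destruct t; try contradiction; apply p_atom; exact I.
  - destruct a as [n| | | | | |a1 a2]; simpl in *; try (apply p_app; auto; fail).
    destruct a1 as [n| | | | | |a11 a12]; simpl in *; try (apply p_app; auto; fail).
    +
      apply par_inv1 in H as [x' [E Hx]]; [|exact I]. subst. simpl in IHpar1.
      apply par_inv1 in IHpar1 as [x'' [E Hx']]; [|exact I]. injection E; intros; subst.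
      apply p_K; auto.
    + destruct a11 as [n| | | | | |a111 a112]; simpl in *; try (apply p_app; auto; fail).
      *
        apply par_inv2 in H as [z' [x' [E [Hz Hx]]]]; try discriminate; [|exact I]. subst a'.
        simpl in IHpar1.
        apply par_inv2 in IHpar1 as [z'' [x'' [E [Hz' Hx']]]]; try discriminate; [|exact I].
        injection E; intros; subst z'' x''.
        rename a12 into z, a2 into x, b into y.
        assert (Cz : conv z z') by (apply par_conv; auto).
        assert (Cx : conv x x') by (apply par_conv; auto).
        assert (Cy : conv y b') by (apply par_conv; auto).
        destruct (dec (conv z Ct)) as [h1|h1].
        { apply p_C1; auto. eapply conv_tr; [apply conv_sy; eauto|auto]. }
        destruct (dec (conv z Cf)) as [h2|h2].
        { apply p_C2; auto. eapply conv_tr; [apply conv_sy; eauto|auto]. }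
        destruct (dec (conv x y)) as [h3|h3].
        { apply p_C3; auto.
          - eapply conv_tr; [apply conv_sy; eauto|]. eapply conv_tr; eauto.
          - intro h; apply h1; eapply conv_tr; eauto.
          - intro h; apply h2; eapply conv_tr; eauto. }
        repeat apply p_app; auto; apply p_atom; exact I.
      *
        apply par_inv2 in H as [z' [x' [E [Hz Hx]]]]; try discriminate; [|exact I]. subst a'.
        simpl in IHpar1.
        apply par_inv2 in IHpar1 as [z'' [x'' [E [Hz' Hx']]]]; try discriminate; [|exact I].
        injection E; intros; subst z'' x''. apply p_S; auto.
  - simpl. auto.
  - simpl. repeat apply p_app; auto.
  - simpl. destruct (dec (conv z Ct)); [auto|contradiction].
  - simpl. destruct (dec (conv z Ct)) as [h|h].
    + exfalso; apply consistent. eapply conv_tr; [apply conv_sy|]; eauto.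
    + destruct (dec (conv z Cf)); [auto|contradiction].
  - simpl. destruct (dec (conv z Ct)); [contradiction|].
    destruct (dec (conv z Cf)); [contradiction|].
    destruct (dec (conv x y)); [auto|contradiction].
Qed.

Inductive star : term -> term -> Prop :=
| star_refl t : star t t
| star_step s t u : par s t -> star t u -> star s u.

Lemma star_trans s t u : star s t -> star t u -> star s u.
Proof. induction 1; intros; auto. econstructor; eauto. Qed.

Lemma strip s t u : par s t -> star s u -> exists v, star t v /\ par u v.
Proof. intros H1 H2. revert t H1. induction H2; intros.
  - exists t0. split; auto. constructor.
  - destruct (IHstar (cd s)) as [v [A B]]. apply par_cd; auto.
    exists v. split; auto. econstructor. apply par_cd; eauto. auto.
Qed.

Lemma confl s t u : star s t -> star s u -> exists v, star t v /\ star u v.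
Proof. intros H1. revert u. induction H1; intros.
  - exists u; split; auto. constructor.
  - destruct (strip _ _ _ H H0) as [v1 [A B]].
    destruct (IHstar _ A) as [v [C D]]. exists v. split; auto. econstructor; eauto.
Qed.

Lemma step_par s t : step s t -> par s t.
Proof. induction 1.
  - destruct H.
    + apply p_C1. apply rst_refl. apply par_refl.
    + apply p_C2. apply rst_refl. apply par_refl.
    + destruct (dec (conv z Ct)). apply p_C1; auto; apply par_refl.
      destruct (dec (conv z Cf)). apply p_C2; auto; apply par_refl.
      apply p_C3; auto. apply rst_refl. apply par_refl.
    + apply p_K, par_refl.
    + apply p_S; apply par_refl.
  - apply p_app; auto; apply par_refl.
  - apply p_app; auto; apply par_refl.
Qed.

Lemma conv_join s t : conv s t -> exists v, star s v /\ star t v.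
Proof. induction 1.
  - exists y. split; [econstructor; [apply step_par; eauto|constructor]|constructor].
  - exists x. split; constructor.
  - destruct IHclos_refl_sym_trans as [v [A B]]. eauto.
  - destruct IHclos_refl_sym_trans1 as [v1 [A B]].
    destruct IHclos_refl_sym_trans2 as [v2 [C D]].
    destruct (confl _ _ _ B C) as [w [E F]].
    exists w. split; eapply star_trans; eauto.
Qed.

Definition pnf t := forall u, par t u -> u = t.

Lemma pnf_star s v : pnf s -> star s v -> v = s.
Proof. intros P H. induction H; auto. apply P in H; subst; auto. Qed.

Lemma pnf_conv s t : pnf s -> pnf t -> conv s t -> s = t.
Proof. intros Ps Pt H. destruct (conv_join _ _ H) as [v [A B]].
  apply pnf_star in A; auto. apply pnf_star in B; auto. congruence. Qed.

Lemma pnf_app a b : pnf (App a b) -> pnf a /\ pnf b.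
Proof. intros P; split; intros u H.
  - assert (E := P _ (p_app _ _ _ _ H (par_refl b))). congruence.
  - assert (E := P _ (p_app _ _ _ _ (par_refl a) H)). congruence.
Qed.

Lemma pnf_atom c : atomic c -> pnf c.
Proof. intros A u H. apply par_atomic in H; auto. Qed.

Lemma nf_app a b : normal_form (App a b) -> normal_form a /\ normal_form b.
Proof. intros N; split; intros u H. apply (N (App u b)), st_appl; auto.
  apply (N (App a u)), st_appr; auto. Qed.

Lemma nf_pnf t : normal_form t -> pnf t.
Proof. induction t; intros N; try (apply pnf_atom; exact I).
  destruct (nf_app _ _ N) as [N1 N2].
  specialize (IHt1 N1). specialize (IHt2 N2).
  intros u H. inversion H; subst; try contradiction.
  - rewrite (IHt1 _ H2), (IHt2 _ H4). auto.
  - exfalso; eapply N; apply st_root, r_K.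
  - exfalso; eapply N; apply st_root, r_S.
  - apply pnf_app in IHt1 as [P1 _]. apply pnf_app in P1 as [_ Pz].
    apply pnf_conv in H2; auto. subst. exfalso; eapply N; apply st_root, r_CT.
    apply pnf_atom; exact I.
  - apply pnf_app in IHt1 as [P1 _]. apply pnf_app in P1 as [_ Pz].
    apply pnf_conv in H2; auto. subst. exfalso; eapply N; apply st_root, r_CF.
    apply pnf_atom; exact I.
  - apply pnf_app in IHt1 as [_ Px].
    apply pnf_conv in H2; auto. subst. exfalso; eapply N; apply st_root, r_Cxx.
Qed.

Theorem mainTheorem7 : forall t1 t2 : term,
  normal_form t1 -> normal_form t2 -> conv t1 t2 -> t1 = t2.
Proof. intros t1 t2 N1 N2 H. apply pnf_conv; auto; apply nf_pnf; auto. Qed.
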